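(* There is a constant $C$ such that for every $N\ge 1$ and every nonempty submatrix $B$ of an $N\times N$ matrix, the quadtree over the $N\times N$ matrix satisfies $|I(B)|\le CN$; that is, $|I(B)|=O(N)$.
   Context: The quadtree over an $N\times N$ matrix (coordinates $\{0,\dots,N-1\}^2$) is the rooted tree of nodes defined as follows. Each node covers a submatrix $[x_0,x_1][y_0,y_1]=\{(x,y):x_0\le x\le x_1,\ y_0\le y\le y_1\}$. The root covers $[0,N-1][0,N-1]$. A node covering $[x_0,x_1][y_0,y_1]$ with more than one element has as children the nodes covering those of the four submatrices $[x_0,x_m][y_0,y_m]$, $[x_m+1,x_1][y_0,y_m]$, $[x_0,x_m][y_m+1,y_1]$, $[x_m+1,x_1][y_m+1,y_1]$ that are nonempty, where $x_m=\lfloor(x_0+x_1)/2\rfloor$, $y_m=\lfloor(y_0+y_1)/2\rfloor$; nodes covering one element have no children. For a submatrix $B$, $S(B)$ denotes the smallest set of mutually disjoint quadtree nodes whose union is $B$ (the inclusion-maximal nodes contained in $B$), and $I(B)=\bigcup_{n\in S(B)}\{m: m \text{ a quadtree node with } m\supseteq n\}$. *)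

(* Defs.v *)
From mathcomp Require Import all_boot.
Set Implicit Arguments. Unset Strict Implicit. Unset Printing Implicit Defensive.

(* A submatrix [x0,x1][y0,y1] is encoded as the tuple (x0, x1, y0, y1). *)
Definition rect := (nat * nat * nat * nat)%type.

Definition rx0 (r : rect) := r.1.1.1.
Definition rx1 (r : rect) := r.1.1.2.
Definition ry0 (r : rect) := r.1.2.
Definition ry1 (r : rect) := r.2.

Definition in_rect (r : rect) (x y : nat) : bool :=
  (rx0 r <= x <= rx1 r) && (ry0 r <= y <= ry1 r).

Definition subrect (r r' : rect) : Prop :=
  forall x y, in_rect r x y -> in_rect r' x y.

Definition nonempty_rect (r : rect) : bool := (rx0 r <= rx1 r) && (ry0 r <= ry1 r).

Definition multi_rect (r : rect) : bool := (rx0 r < rx1 r) || (ry0 r < ry1 r).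

Definition child (r c : rect) : Prop :=
  let xm := (rx0 r + rx1 r) %/ 2 in
  let ym := (ry0 r + ry1 r) %/ 2 in
  multi_rect r /\ nonempty_rect c /\
  ((rx0 c, rx1 c) = (rx0 r, xm) \/ (rx0 c, rx1 c) = (xm.+1, rx1 r)) /\
  ((ry0 c, ry1 c) = (ry0 r, ym) \/ (ry0 c, ry1 c) = (ym.+1, ry1 r)).

(* the submatrices covered by nodes of the quadtree over an N x N matrix *)
Inductive qnode (N : nat) : rect -> Prop :=
| qnode_root : qnode N (0, N.-1, 0, N.-1)
| qnode_child r c : qnode N r -> child r c -> qnode N c.

Definition submatrix (N : nat) (B : rect) : Prop :=
  rx0 B <= rx1 B < N /\ ry0 B <= ry1 B < N.

(* S(B): inclusion-maximal quadtree nodes contained in B *)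
Definition inS (N : nat) (B n : rect) : Prop :=
  qnode N n /\ subrect n B /\
  forall m, qnode N m -> subrect n m -> subrect m B -> m = n.

(* I(B): quadtree nodes containing some node of S(B) *)
Definition inI (N : nat) (B m : rect) : Prop :=
  qnode N m /\ exists n, inS N B n /\ subrect n m.

(* Main.v *)
Require Import Defs.
From mathcomp Require Import all_boot.
From mathcomp Require Import zify.

Definition ival := (nat * nat)%type.
Definition splitI (J : ival) : seq ival :=
  if J.1 < J.2 then [:: (J.1, (J.1 + J.2) %/ 2); (((J.1 + J.2) %/ 2).+1, J.2)]
  else [:: J].
Fixpoint lev (N d : nat) : seq ival :=
  match d with 0 => [:: (0, N.-1)] | d'.+1 => flatten (map splitI (lev N d')) end.
Fixpoint loc (N d p : nat) : ival :=
  match d with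
  | 0 => (0, N.-1)
  | d'.+1 => let J := loc N d' p in
     if J.1 < J.2 then (if p <= (J.1 + J.2) %/ 2 then (J.1, (J.1 + J.2) %/ 2)
                        else (((J.1 + J.2) %/ 2).+1, J.2))
     else J
  end.

Lemma mem_flat_split I s :
  I \in flatten (map splitI s) <-> exists2 J, J \in s & I \in splitI J.
Proof.
split.
  by move/flattenP => [t /mapP [J HJ ->] HI]; exists J.
move=> [J HJ HI]; apply/flattenP; exists (splitI J) => //; apply/mapP; by exists J.
Qed.

Lemma splitI_sub J I : I \in splitI J -> J.1 <= I.1 /\ I.2 <= J.2.
Proof.
rewrite /splitI; case: ifP => H; rewrite !inE; [case/orP|]; move=> /eqP -> /=; lia.
Qed.

Lemma size_flat_split s : size (flatten (map splitI s)) <= 2 * size s.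
Proof.
elim: s => //= J s IH; rewrite size_cat.
have: size (splitI J) <= 2 by rewrite /splitI; case: ifP.
lia.
Qed.

Lemma size_lev N d : size (lev N d) <= 2 ^ d.
Proof.
elim: d => //= d IH; rewrite expnS.
apply: leq_trans (size_flat_split _) _; lia.
Qed.

Lemma aux x y P N : x * 2 <= y -> y * P < N -> x * (2 * P) < N.
Proof. move=> h1 h2; rewrite mulnA; apply: leq_ltn_trans h2; exact: leq_mul. Qed.

Lemma lev_len N d J : 0 < N -> J \in lev N d -> (J.2 - J.1) * 2 ^ d < N.
Proof.
move=> HN; elim: d J => [|d IH] J /=.
  rewrite inE => /eqP -> /=; rewrite expn0 muln1; lia.
move/mem_flat_split => [[a b] HK]; have h := IH _ HK; rewrite /splitI expnS /=.
case: ifP => H; rewrite !inE; [case/orP|]; move=> /eqP -> /=;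
  apply: (@aux _ _ _ _ _ h) => /=; lia.
Qed.

Lemma flat_split_id s : (forall J, J \in s -> ~~ (J.1 < J.2)) ->
  flatten (map splitI s) = s.
Proof.
elim: s => //= J s IH H.
rewrite /splitI (negbTE (H J (mem_head _ _))) /= IH // => K HK.
by apply: H; rewrite inE HK orbT.
Qed.

Lemma lev_stable N D : 0 < N -> N <= 2 ^ D -> forall k, lev N (k + D) = lev N D.
Proof.
move=> HN HD.
have Hs : forall J, J \in lev N D -> ~~ (J.1 < J.2).
  move=> J HJ; have := @lev_len N D J HN HJ.
  case E: (J.2 - J.1) => [|k]; first by lia.
  rewrite mulSn => h; have := leq_addr (k * 2 ^ D) (2 ^ D); lia.
elim => // k IH; rewrite addSn /= IH; exact: flat_split_id.
Qed.

Lemma loc_unique N p d I : I \in lev N d -> I.1 <= p <= I.2 -> I = loc N d p.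
Proof.
elim: d I => [|d IH] I /=; first by rewrite inE => /eqP ->.
move/mem_flat_split => [[a b] HK HI] Hp.
have [h1 h2] := splitI_sub _ _ HI.
case: I HI Hp h1 h2 => [i j] HI /= Hp h1 h2.
have HK' := IH _ HK (ltac:(simpl; lia)).
rewrite -HK'.
move: HI Hp; rewrite /splitI /=; case: ifP => H; rewrite !inE; [case/orP|];
  move=> /eqP [-> ->] Hp; rewrite ?H //; case: ifP => // ?; exfalso; lia.
Qed.

Lemma child_split r c : child r c ->
  (rx0 c, rx1 c) \in splitI (rx0 r, rx1 r) /\ (ry0 c, ry1 c) \in splitI (ry0 r, ry1 r).
Proof.
case: r => [[[a b] e] f]; case: c => [[[a' b'] e'] f'].
rewrite /child /multi_rect /nonempty_rect /rx0 /rx1 /ry0 /ry1 /splitI /=.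
move=> [Hm [/andP [Hx Hy] [Hcx Hcy]]]; split.
  case: ifP => H; rewrite !inE.
    by case: Hcx => /pair_equal_spec [-> ->]; rewrite eqxx ?orbT.
  case: Hcx => /pair_equal_spec [E1 E2]; subst; apply/eqP; [f_equal|exfalso]; lia.
case: ifP => H; rewrite !inE.
  by case: Hcy => /pair_equal_spec [-> ->]; rewrite eqxx ?orbT.
case: Hcy => /pair_equal_spec [E1 E2]; subst; apply/eqP; [f_equal|exfalso]; lia.
Qed.

Lemma child_neq r c : child r c -> c <> r.
Proof.
case: r => [[[a b] e] f]; case: c => [[[a' b'] e'] f'].
rewrite /child /multi_rect /nonempty_rect /rx0 /rx1 /ry0 /ry1 /=.
move=> [Hm [/andP [Hx Hy] [Hcx Hcy]]] [E1 E2 E3 E4]; subst.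
case: Hcx => /pair_equal_spec [E5 E6]; case: Hcy => /pair_equal_spec [E7 E8]; lia.
Qed.

Lemma child_subrect r c : child r c -> subrect c r.
Proof.
case: r => [[[a b] e] f]; case: c => [[[a' b'] e'] f'].
rewrite /child /subrect /in_rect /multi_rect /nonempty_rect /rx0 /rx1 /ry0 /ry1 /=.
move=> [Hm [/andP [Hx Hy] [Hcx Hcy]]] x y.
case: Hcx => /pair_equal_spec [E1 E2]; case: Hcy => /pair_equal_spec [E3 E4]; subst; lia.
Qed.

Lemma qnode_ne N r : qnode N r -> nonempty_rect r.
Proof. by case => [|r' c _ [_ [H _]]] //; rewrite /nonempty_rect /=. Qed.

Lemma qnode_lev N r : qnode N r ->
  exists d, (rx0 r, rx1 r) \in lev N d /\ (ry0 r, ry1 r) \in lev N d.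
Proof.
elim => [|r' c _ [d [H1 H2]] Hc]; first by exists 0; rewrite /= !inE.
have [S1 S2] := child_split _ _ Hc.
by exists d.+1; split; apply/mem_flat_split; [exists (rx0 r', rx1 r') | exists (ry0 r', ry1 r')].
Qed.

Lemma qnode_levD N D r : 0 < N -> N <= 2 ^ D -> qnode N r ->
  exists2 d, d <= D & (rx0 r, rx1 r) \in lev N d /\ (ry0 r, ry1 r) \in lev N d.
Proof.
move=> HN HD /(@qnode_lev N r) [d Hd].
case: (leqP d D) => Hle; first by exists d.
exists D => //.
by rewrite -(@lev_stable N D HN HD (d - D)) subnK // ltnW.
Qed.

Definition mkr (I J : ival) : rect := (I.1, I.2, J.1, J.2).
Definition cand N (B : rect) d : seq rect :=
  [seq mkr X Y | X <- flatten (map splitI [:: loc N d (rx0 B); loc N d (rx1 B)]),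
                 Y <- lev N d.+1] ++
  [seq mkr X Y | X <- lev N d.+1,
                 Y <- flatten (map splitI [:: loc N d (ry0 B); loc N d (ry1 B)])].
Fixpoint cands N B k : seq rect :=
  match k with 0 => [::] | k'.+1 => cands N B k' ++ cand N B k' end.

Lemma size_cand N B d : size (cand N B d) <= 16 * 2 ^ d.
Proof.
rewrite /cand size_cat !size_allpairs.
have h1 := size_flat_split [:: loc N d (rx0 B); loc N d (rx1 B)].
have h1' := size_flat_split [:: loc N d (ry0 B); loc N d (ry1 B)].
have h2 := size_lev N d.+1; rewrite expnS in h2.
have := leq_mul h1 h2; have := leq_mul h2 h1'; rewrite /=; lia.
Qed.

Lemma size_cands N B k : size (cands N B k) <= 16 * 2 ^ k.
Proof.
elim: k => //= k IH; rewrite size_cat expnS; have := size_cand N B k; lia.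
Qed.

Lemma mem_cands N B k m d : d < k -> m \in cand N B d -> m \in cands N B k.
Proof.
elim: k => // k IH; rewrite ltnS leq_eqVlt => /orP [/eqP -> | h] H /=;
  rewrite mem_cat; [by rewrite H orbT | by rewrite IH].
Qed.

Lemma key N D B m : 0 < N -> N <= 2 ^ D -> inI N B m ->
  m = (0, N.-1, 0, N.-1) \/ exists2 d, d <= D & m \in cand N B d.
Proof.
move=> HN HD [Hq [n [[Hnq [HnB Hmax]] Hnm]]].
move: Hnm; case: m / Hq => [|P m HP Hc] Hnm; first by left.
right.
have HmP := child_subrect _ _ Hc.
have nPB : ~ subrect P B.
  move=> HPB.
  have E1 : m = n.
    apply: Hmax (qnode_child HP Hc) Hnm _ => x y h; exact: HPB x y (HmP x y h).
  have E2 : P = n.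
    apply: Hmax HP _ HPB => x y h; exact: HmP x y (Hnm x y h).
  by apply: (child_neq _ _ Hc); rewrite E1 E2.
have Hne := @qnode_ne N n Hnq.
have pin : in_rect n (rx0 n) (ry0 n).
  by move: Hne; rewrite /in_rect /nonempty_rect => /andP [h1 h2]; rewrite h1 h2 !leqnn.
have pB := HnB _ _ pin.
have pP := HmP _ _ (Hnm _ _ pin).
have Hk : [|| rx0 P <= rx0 B <= rx1 P, rx0 P <= rx1 B <= rx1 P,
              ry0 P <= ry0 B <= ry1 P | ry0 P <= ry1 B <= ry1 P].
  case: (boolP [|| _, _, _ | _]) => // hneg; exfalso; apply: nPB => x y.
  move: hneg pB pP; rewrite /in_rect; lia.
have [d hd [L1 L2]] := @qnode_levD N D P HN HD HP.
have [S1 S2] := child_split _ _ Hc.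
exists d => //.
have Em : m = mkr (rx0 m, rx1 m) (ry0 m, ry1 m) by case: m {Hnm HmP Hc S1 S2} => [[[]]].
rewrite Em /cand mem_cat.
have Hx : (rx0 m, rx1 m) \in lev N d.+1 by apply/mem_flat_split; exists (rx0 P, rx1 P).
have Hy : (ry0 m, ry1 m) \in lev N d.+1 by apply/mem_flat_split; exists (ry0 P, ry1 P).
case/or4P: Hk => h.
- rewrite (@loc_unique N (rx0 B) d _ L1 h) in S1.
  apply/orP; left; apply/allpairsP; exists ((rx0 m, rx1 m), (ry0 m, ry1 m)); split => //.
  by apply/mem_flat_split; exists (loc N d (rx0 B)); rewrite ?mem_head.
- rewrite (@loc_unique N (rx1 B) d _ L1 h) in S1.
  apply/orP; left; apply/allpairsP; exists ((rx0 m, rx1 m), (ry0 m, ry1 m)); split => //.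
  by apply/mem_flat_split; exists (loc N d (rx1 B)); rewrite ?inE ?eqxx ?orbT.
- rewrite (@loc_unique N (ry0 B) d _ L2 h) in S2.
  apply/orP; right; apply/allpairsP; exists ((rx0 m, rx1 m), (ry0 m, ry1 m)); split => //.
  by apply/mem_flat_split; exists (loc N d (ry0 B)); rewrite ?mem_head.
- rewrite (@loc_unique N (ry1 B) d _ L2 h) in S2.
  apply/orP; right; apply/allpairsP; exists ((rx0 m, rx1 m), (ry0 m, ry1 m)); split => //.
  by apply/mem_flat_split; exists (loc N d (ry1 B)); rewrite ?inE ?eqxx ?orbT.
Qed.

Theorem theorem2 :
  exists C : nat, forall N : nat, 1 <= N ->
    forall B : rect, submatrix N B ->
    forall s : seq rect, uniq s -> (forall m, m \in s -> inI N B m) ->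
    size s <= C * N.
Proof.
exists 65 => N HN B HB s Hu Hs.
pose D := (trunc_log 2 N).+1.
have HD1 : N <= 2 ^ D by apply: ltnW; exact: trunc_log_ltn.
have HD2 : 2 ^ D <= 2 * N by rewrite /D expnS leq_mul2l /=; exact: trunc_logP.
have Hsub : {subset s <= (0, N.-1, 0, N.-1) :: cands N B D.+1}.
  move=> m /Hs Hm; rewrite inE.
  case: (@key N D B m HN HD1 Hm) => [-> | [d hd Hd]]; first by rewrite eqxx.
  by apply/orP; right; apply: (@mem_cands N B _ m d) => //; rewrite ltnS.
apply: leq_trans (uniq_leq_size Hu Hsub) _.
have -> : size ((0, N.-1, 0, N.-1) :: cands N B D.+1) = (size (cands N B D.+1)).+1 by [].
have := size_cands N B D.+1; rewrite expnS; clearbody D; move: HD2 HN; lia.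
Qed.
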